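(* Let $q\ge 4$ be even. Suppose there exists a Steiner quadruple system on $B_q$ that satisfies the step property with respect to some total order on $B_q$. Then $N(4,q,1)=\dfrac{q^2(q+2)}{4}$.
   Context: $B_q=\{0,\dots,q-1\}$ and $B_q^n$ is the set of words of length $n$ over $B_q$. $N(n,q,1)$ is the maximum cardinality of a code $C\subseteq B_q^n$ capable of correcting single deletions, i.e. such that the sets $\lfloor x\rfloor_1$ ($x\in C$) of words obtained from $x$ by deleting one letter are pairwise disjoint (equivalently, the minimum deletion–insertion distance of $C$ exceeds 2). A Steiner quadruple system $SQS(q)$ on $B_q$ is a set of 4-element subsets (quadruples) of $B_q$ such that every 3-element subset of $B_q$ is contained in exactly one quadruple. Step property: given a total order $L_0<L_1<\cdots<L_{q-1}$ on $B_q=\{L_0,\dots,L_{q-1}\}$, the $SQS(q)$ satisfies the step property with respect to this order if for every $t\in\{0,\dots,q/2-1\}$ and every quadruple of the system of the form $\{L_{2t},L_{2t+1},L_a,L_b\}$, either $a<2t$ and $b<2t$, or $a>2t+1$ and $b>2t+1$. *)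

(* Defs.v *)
From mathcomp Require Import all_boot all_fingroup.
Set Implicit Arguments. Unset Strict Implicit. Unset Printing Implicit Defensive.

(* B_q = 'I_q; words of length n over B_q = n.-tuple 'I_q. *)

Definition del1 (T : eqType) (x : seq T) (k : nat) : seq T :=
  take k x ++ drop k.+1 x.

Definition del_ball (T : eqType) (x : seq T) : seq (seq T) :=
  [seq del1 x k | k <- iota 0 (size x)].

Definition single_del_correcting (q n : nat) (C : {set n.-tuple 'I_q}) : bool :=
  [forall x in C, forall y in C,
     (x != y) ==> ~~ has (fun w => w \in del_ball (val y)) (del_ball (val x))].

Definition N1 (n q : nat) : nat :=
  \max_(C : {set n.-tuple 'I_q} | single_del_correcting C) #|C|.

Definition is_SQS (q : nat) (S : {set {set 'I_q}}) : bool :=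
  [forall Q in S, #|Q| == 4] &&
  [forall T : {set 'I_q}, (#|T| == 3) ==> (#|[set Q in S | T \subset Q]| == 1)].

(* Step property w.r.t. the total order L_0 < L_1 < ... < L_{q-1},
   given by the bijection L : index -> element. *)
Definition step_property (q : nat) (S : {set {set 'I_q}}) (L : {perm 'I_q}) : Prop :=
  forall (t : nat) (i j : 'I_q), val i = t.*2 -> val j = (t.*2).+1 ->
  forall Q, Q \in S -> L i \in Q -> L j \in Q ->
  forall a b : 'I_q, L a \in Q -> L b \in Q ->
    a != i -> a != j -> b != i -> b != j ->
    ((val a < val i) && (val b < val i)) || ((val j < val a) && (val j < val b)).

(* Main.v *)
Require Import Defs.
From mathcomp Require Import all_boot all_fingroup.
From Stdlib Require Import Lia.
Set Implicit Arguments. Unset Strict Implicit. Unset Printing Implicit Defensive.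

Section Gen.
Variable T : eqType.
Definition W (z : seq T) : nat :=
  match z with [:: a; b; c] => 1 + (a == b) + (b == c) + ((a == b) && (b == c)) | _ => 0 end.
Definition Sa (a : T) (z : seq T) : bool :=
  match z with [:: u; v; w] => (u == a) && (w == a) && (v != a) | _ => false end.
Definition FF (x : seq T) := sumn (map W (undup (del_ball x))).
Definition hh (x : seq T) :=
  sumn [seq (odd (count (Sa a) (undup (del_ball x))) : nat) | a <- undup x].
End Gen.

Lemma check_FF : forall a b c d, a < 4 -> b < 4 -> c < 4 -> d < 4 ->
  4 + hh [:: a; b; c; d] <= FF [:: a; b; c; d].
Proof.
move=> a b c d.
case: a => [|[|[|[|a]]]] //; case: b => [|[|[|[|b]]]] //; case: c => [|[|[|[|c]]]] //; case: d => [|[|[|[|d]]]] //.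
Qed.

Lemma mem_map_in (T U : eqType) (g : T -> U) (s : seq T) a :
  {in a :: s &, injective g} -> (g a \in map g s) = (a \in s).
Proof.
move=> inj; apply/mapP/idP => [[b bs /inj eq_ab]|]; last by move=> ?; exists a.
by rewrite eq_ab ?inE ?eqxx ?bs ?orbT.
Qed.

Lemma undup_map_in (T U : eqType) (g : T -> U) (s : seq T) :
  {in s &, injective g} -> undup (map g s) = map g (undup s).
Proof.
elim: s => //= a s IH inj.
rewrite mem_map_in // IH; first by case: (a \in s).
by move=> x y xs ys; apply: inj; rewrite inE ?xs ?ys orbT.
Qed.

Lemma del1_map (T U : eqType) (f : T -> U) x k : del1 (map f x) k = map f (del1 x k).
Proof. by rewrite /del1 map_cat map_take map_drop. Qed.

Lemma del_ball_map (T U : eqType) (f : T -> U) x :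
  del_ball (map f x) = map (map f) (del_ball x).
Proof.
rewrite /del_ball size_map -map_comp; apply: eq_map => k /=; exact: del1_map.
Qed.

Lemma del1_sub (T : eqType) (x : seq T) k : {subset del1 x k <= x}.
Proof. by move=> z; rewrite /del1 mem_cat => /orP[/mem_take|/mem_drop]. Qed.

Lemma del_ball_sub (T : eqType) (x z : seq T) : z \in del_ball x -> {subset z <= x}.
Proof. by case/mapP=> k _ ->; apply: del1_sub. Qed.

Section Inv.
Variables (T U : eqType) (f : T -> U) (x : seq T).
Hypothesis inj : {in x &, injective f}.

Lemma injD : {in del_ball x &, injective (map f)}.
Proof.
move=> z1 z2 h1 h2; apply: (inj_in_map inj); rewrite inE; apply/allP => u.
  exact: (del_ball_sub h1).
exact: (del_ball_sub h2).
Qed.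

Lemma undupD_map : undup (del_ball (map f x)) = map (map f) (undup (del_ball x)).
Proof.
rewrite del_ball_map undup_map_in //; exact: injD.
Qed.

Lemma W_map z : {subset z <= x} -> W (map f z) = W z.
Proof.
case: z => [|a [|b [|c [|d z]]]] //= sub.
have ha : a \in x by apply: sub; rewrite !inE eqxx.
have hb : b \in x by apply: sub; rewrite !inE eqxx ?orbT.
have hc : c \in x by apply: sub; rewrite !inE eqxx ?orbT.
by rewrite (inj_in_eq inj) // (inj_in_eq inj).
Qed.

Lemma Sa_map a z : a \in x -> {subset z <= x} -> Sa (f a) (map f z) = Sa a z.
Proof.
case: z => [|u [|v [|w [|d z]]]] //= ha sub.
have hu : u \in x by apply: sub; rewrite !inE eqxx.
have hv : v \in x by apply: sub; rewrite !inE eqxx ?orbT.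
have hw : w \in x by apply: sub; rewrite !inE eqxx ?orbT.
by rewrite !(inj_in_eq inj).
Qed.

Lemma FF_map : FF (map f x) = FF x.
Proof.
rewrite /FF undupD_map -map_comp; apply: congr1; apply/eq_in_map => z.
rewrite mem_undup => hz /=; apply: W_map; exact: del_ball_sub hz.
Qed.

Lemma hh_map : hh (map f x) = hh x.
Proof.
rewrite /hh undupD_map undup_map_in // -map_comp; apply: congr1; apply/eq_in_map => a.
rewrite mem_undup => ha /=; rewrite count_map; congr (nat_of_bool (odd _)).
apply: eq_in_count => z; rewrite mem_undup => hz /=.
apply: Sa_map => //; exact: del_ball_sub hz.
Qed.
End Inv.

Lemma pattern (T : eqType) (x : seq T) (x0 : T) :
  let p := map (index^~ x) x in
  [/\ map (nth x0 x) p = x, {in p &, injective (nth x0 x)} & all (fun i => i < size x) p].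
Proof.
move=> p; split.
- rewrite /p -map_comp; apply: map_id_in => z hz /=; exact: nth_index.
- move=> i j /mapP[u hu ->] /mapP[v hv ->]; rewrite !nth_index // => ->; done.
- by apply/allP => i /mapP[u hu ->]; rewrite index_mem.
Qed.

Lemma FF_ge (T : eqType) (x : seq T) : size x = 4 -> 4 + hh x <= FF x.
Proof.
case: x => [|a [|b [|c [|d [|e x]]]]] // _.
have [h1 h2 h3] := pattern [:: a; b; c; d] a.
rewrite -h1 FF_map // hh_map //.
move: h3; set p := map _ _ => h3.
have : size p = 4 by rewrite size_map.
case: p h3 => [|i0 [|i1 [|i2 [|i3 [|? ?]]]]] //= /and5P[? ? ? ? _] _.
exact: check_FF.
Qed.


Section Count.
Variable q : nat.
Local Notation Y := ('I_q * 'I_q * 'I_q)%type.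
Definition tseq (y : Y) : seq 'I_q := [:: y.1.1; y.1.2; y.2].

Lemma tseq_pred1 (z : seq 'I_q) (G : seq 'I_q -> nat) : size z = 3 ->
  \sum_(y : Y | tseq y == z) G (tseq y) = G z.
Proof.
case: z => [|a [|b [|c [|? ?]]]] // _.
rewrite (big_pred1 (a, b, c)) // => [[[u v] w]] /=.
by rewrite /tseq /= !eqseq_cons andbT !xpair_eqE andbA.
Qed.

Lemma sum_tseq (s : seq (seq 'I_q)) (G : seq 'I_q -> nat) :
  uniq s -> all (fun z => size z == 3) s ->
  \sum_(y : Y | tseq y \in s) G (tseq y) = sumn (map G s).
Proof.
elim: s => [|z s IH] /=; first by move=> _ _; rewrite big_pred0.
case/andP=> zs us /andP[/eqP sz ss].
rewrite (bigID (fun y => tseq y == z)) /=.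
rewrite (eq_bigl (fun y => tseq y == z)); last first.
  by move=> y; rewrite inE; case: (tseq y == z); rewrite ?andbT ?andbF.
rewrite tseq_pred1 // -IH //; congr (_ + _); apply: eq_bigl => y.
rewrite inE; case: (tseq y =P z) => [->|_] /=; rewrite ?andbT //.
by rewrite (negbTE zs).
Qed.

Lemma size_del_ball (x : seq 'I_q) z : size x = 4 -> z \in del_ball x -> size z == 3.
Proof.
move=> sx /mapP[k]; rewrite mem_iota sx add0n => hk ->.
rewrite /del1 size_cat size_take size_drop sx.
by case: k hk => [|[|[|[|?]]]].
Qed.

Lemma FF_sum (x : seq 'I_q) : size x = 4 ->
  FF x = \sum_(y : Y) W (tseq y) * (tseq y \in del_ball x).
Proof.
move=> sx; rewrite /FF -sum_tseq ?undup_uniq //; last first.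
  by apply/allP => z; rewrite mem_undup; apply: size_del_ball.
rewrite big_mkcond; apply: eq_bigr => y _; rewrite mem_undup.
by case: (_ \in _); rewrite ?muln1 ?muln0.
Qed.

Lemma cnt_sum (x : seq 'I_q) (P : pred (seq 'I_q)) : size x = 4 ->
  count P (undup (del_ball x)) = \sum_(y : Y) P (tseq y) * (tseq y \in del_ball x).
Proof.
move=> sx; rewrite -sumn_count -sum_tseq ?undup_uniq //; last first.
  by apply/allP => z; rewrite mem_undup; apply: size_del_ball.
rewrite big_mkcond; apply: eq_bigr => y _; rewrite mem_undup.
by case: (_ \in _); rewrite ?muln1 ?muln0.
Qed.

Lemma sum_eq1 (a : 'I_q) : \sum_(b : 'I_q) (a == b) = 1.
Proof.
rewrite (bigD1 a) //= eqxx big1 // => b /negbTE; rewrite eq_sym => ->; done.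
Qed.

Lemma sum3 (F : Y -> nat) :
  \sum_(y : Y) F y = \sum_(a : 'I_q) \sum_(b : 'I_q) \sum_(c : 'I_q) F (a, b, c).
Proof.
transitivity (\sum_(ab : 'I_q * 'I_q) \sum_(c : 'I_q) F (ab, c)).
  rewrite (pair_bigA _ (fun ab c => F (ab, c))); apply: eq_bigr; by case.
rewrite (pair_bigA _ (fun a b => \sum_(c : 'I_q) F (a, b, c))); apply: eq_bigr; by case.
Qed.

Lemma sumW : \sum_(y : Y) W (tseq y) = q ^ 3 + 2 * q ^ 2 + q.
Proof.
have -> : \sum_(y : Y) W (tseq y) =
  \sum_(y : Y) 1 + \sum_(y : Y) (y.1.1 == y.1.2) + \sum_(y : Y) (y.1.2 == y.2)
  + \sum_(y : Y) ((y.1.1 == y.1.2) && (y.1.2 == y.2)).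
  by rewrite -!big_split.
rewrite sum1_card !card_prod !card_ord.
rewrite !sum3 /=.
have e1 : \sum_(a : 'I_q) \sum_(b : 'I_q) \sum_(c : 'I_q) (a == b) = q ^ 2.
  transitivity (\sum_(a : 'I_q) q).
    apply: eq_bigr => a _; transitivity (\sum_(b : 'I_q) (a == b) * q).
      by apply: eq_bigr => b _; rewrite sum_nat_const card_ord mulnC.
    by rewrite -big_distrl /= sum_eq1 mul1n.
  by rewrite sum_nat_const card_ord.
have e2 : \sum_(a : 'I_q) \sum_(b : 'I_q) \sum_(c : 'I_q) (b == c) = q ^ 2.
  transitivity (\sum_(a : 'I_q) q).
    apply: eq_bigr => a _; transitivity (\sum_(b : 'I_q) 1).
      by apply: eq_bigr => b _; apply: sum_eq1.
    by rewrite sum1_card card_ord.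
  by rewrite sum_nat_const card_ord.
have e3 : \sum_(a : 'I_q) \sum_(b : 'I_q) \sum_(c : 'I_q) ((a == b) && (b == c)) = q.
  transitivity (\sum_(a : 'I_q) 1); last by rewrite sum1_card card_ord.
  apply: eq_bigr => a _; rewrite -(sum_eq1 a); apply: eq_bigr => b _.
  rewrite -[X in _ = X]muln1 -(sum_eq1 b) big_distrr /=; apply: eq_bigr => c _.
  by case: (a == b); case: (b == c).
rewrite e1 e2 e3 -!mulnA.
by rewrite !expnS expn0 !muln1 mul2n -addnn !addnA.
Qed.

End Count.


Definition patU : seq (seq nat) :=
  [:: [:: 0; 1; 2; 3]; [:: 0; 3; 2; 1]; [:: 1; 3; 0; 2]; [:: 2; 1; 0; 3];
      [:: 3; 1; 2; 0]; [:: 2; 3; 0; 1]].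
Definition patM : seq (seq nat) :=
  [:: [:: 2; 0; 1; 2]; [:: 3; 0; 1; 3]; [:: 0; 2; 3; 0]; [:: 1; 2; 3; 1];
      [:: 0; 3; 2; 1]; [:: 1; 3; 0; 2]; [:: 2; 1; 0; 3]; [:: 3; 1; 2; 0]].

Definition cross (z : seq nat) : bool :=
  match z with
  | [:: i; j; k] => (i == k) && (((i < 2) && (2 <= j)) || ((2 <= i) && (j < 2)))
  | _ => false end.

Definition goodpat (des : seq (seq nat)) :=
  all (fun p => (size p == 4) && all (fun i => i < 4) p && (FF p == 4)) des.

Lemma goodU : goodpat patU. Proof. by []. Qed.
Lemma goodM : goodpat patM. Proof. by []. Qed.

Definition disj (des : seq (seq nat)) :=
  all (fun p1 => all (fun p2 => (p1 == p2) || ~~ has (fun z => z \in del_ball p2) (del_ball p1)) des) des.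
Lemma disjU : disj patU. Proof. by []. Qed.
Lemma disjM : disj patM. Proof. by []. Qed.

Lemma shapeU : all (fun p => all uniq (del_ball p)) patU. Proof. by []. Qed.
Lemma shapeM : all (fun p => all (fun z => uniq z || cross z) (del_ball p)) patM. Proof. by []. Qed.

Lemma cover_dist (des : seq (seq nat)) : des = patU \/ des = patM ->
  forall i j k, i < 4 -> j < 4 -> k < 4 -> uniq [:: i; j; k] ->
  has (fun p => [:: i; j; k] \in del_ball p) des.
Proof.
move=> hdes i j k.
case: i => [|[|[|[|i]]]] //; case: j => [|[|[|[|j]]]] //; case: k => [|[|[|[|k]]]] //;
  by case: hdes => ->.
Qed.

Lemma cover_cross i j : i < 4 -> j < 4 -> cross [:: i; j; i] ->
  has (fun p => [:: i; j; i] \in del_ball p) patM.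
Proof.
by case: i => [|[|[|[|i]]]] //; case: j => [|[|[|[|j]]]].
Qed.


Lemma sdcP q n (C : {set n.-tuple 'I_q}) : single_del_correcting C ->
  forall x y, x \in C -> y \in C -> x != y ->
  forall w, w \in del_ball (val x) -> w \in del_ball (val y) -> False.
Proof.
move=> /forallP h x y xC yC nxy w wx wy.
have := h x; rewrite xC /= => /forallP/(_ y); rewrite yC nxy /= => /hasPn/(_ w wx).
by rewrite wy.
Qed.

Lemma odd_sum_le (I : finType) (A : pred I) (F : I -> nat) :
  odd (\sum_(i in A) F i) <= \sum_(i in A) odd (F i).
Proof.
apply: (big_rec2 (fun a b => odd a <= b)) => // i a b _ h.
rewrite oddD; apply: leq_trans (leq_add (leqnn (odd (F i))) h).
by case: (odd (F i)); case: (odd a).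
Qed.

Section Upper.
Variable q : nat.
Local Notation Y := ('I_q * 'I_q * 'I_q)%type.
Variable C : {set 4.-tuple 'I_q}.
Hypothesis sdc : single_del_correcting C.

Definition cov (y : Y) := \sum_(x in C) (tseq y \in del_ball (val x)).

Lemma cov_le1 y : cov y <= 1.
Proof.
rewrite /cov; case: (boolP [exists x in C, tseq y \in del_ball (val x)]).
  case/existsP => x0 /andP[x0C hx0]; rewrite (bigD1 x0) //= hx0 big1 // => x /andP[xC nx].
  apply/eqP; rewrite eqb0; apply/negP => hx.
  exact: (sdcP sdc xC x0C nx hx hx0).
move=> /existsPn h; rewrite big1 // => x xC; have := h x; rewrite xC /=.
by move/negbTE => ->.
Qed.

Lemma sum_cov (G : seq 'I_q -> nat) :
  \sum_(x in C) \sum_(y : Y) G (tseq y) * (tseq y \in del_ball (val x)) =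
  \sum_(y : Y) G (tseq y) * cov y.
Proof.
rewrite exchange_big; apply: eq_bigr => y _; rewrite /cov big_distrr.
done.
Qed.

Lemma sumFF : \sum_(x in C) FF (val x) = \sum_(y : Y) W (tseq y) * cov y.
Proof.
rewrite -sum_cov; apply: eq_bigr => x _; apply: FF_sum; exact: size_tuple.
Qed.

Lemma Sa_card (a : 'I_q) : \sum_(y : Y) Sa a (tseq y) = q - 1.
Proof.
rewrite sum3 (bigD1 a) //= [X in _ + X]big1 ?addn0; last first.
  move=> u /negbTE hu; apply: big1 => v _; apply: big1 => w _.
  by rewrite /tseq /= hu.
transitivity (\sum_(v : 'I_q) (v != a)).
  apply: eq_bigr => v _; rewrite (bigD1 a) //= big1 ?addn0.
    by rewrite /tseq /= eqxx.
  by move=> w /negbTE hw; rewrite /tseq /= hw andbF.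
rewrite (bigID (fun v => v != a)) /= [X in _ + X]big1 ?addn0; last first.
  by move=> v /negbNE ->.
rewrite (eq_bigr (fun _ => 1)); last by move=> v ->.
by rewrite sum1_card cardC1 card_ord subn1.
Qed.

Lemma hh_sum (x : seq 'I_q) : size x = 4 ->
  \sum_(a : 'I_q) odd (count (Sa a) (undup (del_ball x))) = hh x.
Proof.
move=> sx; rewrite /hh sumnE big_map [RHS]big_uniq ?undup_uniq //.
rewrite [RHS]big_mkcond; apply: eq_bigr => a _.
case: ifP => // ha; suff -> : count (Sa a) (undup (del_ball x)) = 0 by [].
apply/eqP; rewrite -leqn0 leqNgt -has_count; apply/hasP => [[z]].
rewrite mem_undup => hz; have sub := del_ball_sub hz.
case: z hz sub => [|u [|v [|w [|? ?]]]] //= _ sub /andP[/andP[/eqP ua _] _].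
by move: ha; rewrite mem_undup -ua sub ?inE ?eqxx.
Qed.

Lemma Sa_le1 (y : Y) : \sum_(a : 'I_q) Sa a (tseq y) <= 1.
Proof.
rewrite (bigD1 y.1.1) //= big1 ?addn0; first exact: leq_b1.
move=> a hne; rewrite /tseq /=; case: eqP => // ha.
by move: hne; rewrite ha eqxx.
Qed.

Lemma W_ge1 (y : Y) : 1 <= W (tseq y).
Proof. by rewrite /W /tseq /= -!addnA leq_addr. Qed.

Lemma upper_main : 0 < q -> ~~ odd q -> #|C| * 4 + q <= q ^ 3 + 2 * q ^ 2 + q.
Proof.
move=> q0 qe.
set U := \sum_(y : Y) W (tseq y) * (1 - cov y).
have hq : q <= \sum_(x in C) hh (val x) + U.
  have step : forall a : 'I_q, 1 <= \sum_(x in C) odd (count (Sa a) (undup (del_ball (val x))))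
                   + \sum_(y : Y) Sa a (tseq y) * (1 - cov y).
    move=> a.
    have e : q - 1 = \sum_(x in C) count (Sa a) (undup (del_ball (val x)))
                     + \sum_(y : Y) Sa a (tseq y) * (1 - cov y).
      rewrite -(Sa_card a).
      have -> : \sum_(x in C) count (Sa a) (undup (del_ball (val x))) =
                \sum_(y : Y) Sa a (tseq y) * cov y.
        rewrite -(sum_cov (fun z => Sa a z)); apply: eq_bigr => x _; apply: cnt_sum; exact: size_tuple.
      rewrite -big_split /=; apply: eq_bigr => y _.
      by rewrite -mulnDr subnKC ?cov_le1 // muln1.
    have o : odd (q - 1) by rewrite oddB // (negbTE qe).
    move: o; rewrite e oddD => o.
    apply: leq_trans (leq_add (odd_sum_le _ _) (leqnn _)).
    move: o; case: (odd (\sum_(x in C) _)) => //= o.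
    by rewrite add0n; case: (\sum_(y : Y) _) o.
  have : \sum_(a : 'I_q) 1 <= \sum_(a : 'I_q) (\sum_(x in C) odd (count (Sa a) (undup (del_ball (val x))))
                   + \sum_(y : Y) Sa a (tseq y) * (1 - cov y)).
    by apply: leq_sum => a _; exact: step.
  rewrite sum1_card card_ord big_split /=.
  move/leq_trans; apply; apply: leq_add.
    rewrite exchange_big; apply: eq_leq; apply: eq_bigr => x _; apply: hh_sum.
    exact: size_tuple.
  rewrite exchange_big /U; apply: leq_sum => y _; rewrite -big_distrl /=.
  by apply: leq_mul => //; apply: leq_trans (Sa_le1 y) (W_ge1 y).
have h4 : #|C| * 4 + \sum_(x in C) hh (val x) <= \sum_(x in C) FF (val x).
  rewrite -sum1_card big_distrl /= -big_split /=; apply: leq_sum => x _.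
  rewrite mul1n; apply: FF_ge; exact: size_tuple.
rewrite -sumW.
have -> : \sum_(y : Y) W (tseq y) = \sum_(x in C) FF (val x) + U.
  rewrite sumFF /U -big_split /=; apply: eq_bigr => y _.
  by rewrite -mulnDr subnKC ?cov_le1 // muln1.
apply: leq_trans (leq_add h4 (leqnn U)).
by rewrite -addnA leq_add2l.
Qed.

End Upper.


Lemma relabel q (S : {set {set 'I_q}}) (L : {perm 'I_q}) :
  is_SQS S -> step_property S L -> exists S', is_SQS S' /\ step_property S' (1%g : {perm 'I_q}).
Proof.
move=> /andP[/forallP h4 /forallP h3] hst.
pose g := fun Q : {set 'I_q} => L @^-1: Q.
have ginj : injective g.
  move=> Q1 Q2 /setP e; apply/setP => x; have := e (L^-1 x)%g.
  by rewrite !inE permKV.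
exists (g @: S); split.
  apply/andP; split.
    apply/forallP => Q'; apply/implyP => /imsetP[Q QS ->].
    rewrite card_preimset; last exact: perm_inj.
    by have := h4 Q; rewrite QS.
  apply/forallP => T'; apply/implyP => hT'.
  have e : [set Q' in g @: S | T' \subset Q'] = g @: [set Q in S | L @: T' \subset Q].
    apply/setP => Q'; rewrite inE; apply/andP/imsetP.
      case=> /imsetP[Q QS ->] sub; exists Q => //.
      by rewrite inE QS sub_imset_pre.
    case=> Q; rewrite inE => /andP[QS sub] ->; split; first exact: imset_f.
    by rewrite -sub_imset_pre.
  rewrite e card_imset //.
  have := h3 (L @: T'); rewrite card_imset; last exact: perm_inj.
  by rewrite hT'.
move=> t i j hi hj Q' /imsetP[Q QS ->] hiQ hjQ a b haQ hbQ.
rewrite !inE !perm1 in hiQ hjQ haQ hbQ.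
exact: (hst t i j hi hj Q QS hiQ hjQ a b haQ hbQ).
Qed.


Lemma half_eq x y : x./2 = y./2 -> x < y -> y = x.+1.
Proof.
move=> e lt; have hx := odd_double_half x; have hy := odd_double_half y.
rewrite e in hx; move: lt; rewrite -hx -{2}hy ltn_add2r.
case: (odd x) hx; case: (odd y) hy => //= hy hx _.
Qed.

Lemma partner_uniq x y z : x./2 = y./2 -> x != y -> z./2 = y./2 -> z != y -> x = z.
Proof.
move=> ex nx ez nz; have hx := odd_double_half x; have hy := odd_double_half y.
have hz := odd_double_half z; rewrite ex in hx; rewrite ez in hz.
move: (y./2.*2) hx hz hy => h hx hz hy.
move: nx nz; rewrite -hx -hz -hy.
by case: (odd x); case: (odd y); case: (odd z) => //=; rewrite ?eqxx.
Qed.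

Lemma pairpos_fin k l : k < l -> l < 4 ->
  (forall m n, m < 4 -> n < 4 -> m != k -> m != l -> n != k -> n != l ->
     ((m < k) && (n < k)) || ((l < m) && (l < n))) ->
  ((k == 0) && (l == 1)) || ((k == 2) && (l == 3)).
Proof.
move=> kl l4 H.
case: k l kl l4 H => [|[|[|[|k]]]] [|[|[|[|l]]]] //= _ _ H;
 first [by move/(_ 1 3 isT isT isT isT isT isT): H
       |by move/(_ 1 2 isT isT isT isT isT isT): H
       |by move/(_ 0 3 isT isT isT isT isT isT): H
       |by move/(_ 0 2 isT isT isT isT isT isT): H].
Qed.

Lemma enum_sorted q (Q : {set 'I_q}) : sorted (fun a b : 'I_q => val a < val b) (enum Q).
Proof.
have e : enum Q = [seq x <- enum 'I_q | x \in Q].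
  rewrite -!deprecated_filter_index_enum -filter_predI; apply: eq_filter => x.
  by rewrite /= andbT.
rewrite e; apply: sorted_filter; first by move=> a b c; apply: ltn_trans.
have := iota_ltn_sorted 0 q; rewrite -val_enum_ord sorted_map.
done.
Qed.

Lemma cross_fin i j : i < 4 -> j < 4 -> cross [:: i; j; i] ->
  let k := 5 - maxn i j in
  [&& k < 4, k != i, k != j &
    ((i < j) && (((j == 2) && (k == 3)) || ((j == 3) && (k == 2))))
    || ((j < i) && (((i == 2) && (k == 3)) || ((i == 3) && (k == 2))))].
Proof. by case: i => [|[|[|[|i]]]] //; case: j => [|[|[|[|j]]]]. Qed.

Lemma del_ball_map_inv (T U : eqType) (f : T -> U) p w :
  w \in del_ball (map f p) -> exists2 z, z \in del_ball p & w = map f z.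
Proof. by rewrite del_ball_map => /mapP[z hz ->]; exists z. Qed.

Lemma sum_le1 (I : finType) (P : pred I) : (forall i j, P i -> P j -> i = j) ->
  \sum_(i : I) P i <= 1.
Proof.
move=> h; case: (boolP [exists i, P i]).
  case/existsP => i0 hi0; rewrite (bigD1 i0) //= hi0 big1 // => i ni.
  by apply/eqP; rewrite eqb0; apply/negP => hi; move: ni; rewrite (h _ _ hi hi0) eqxx.
by move/existsPn => hn; rewrite big1 // => i _; rewrite (negbTE (hn i)).
Qed.

Section Lower.
Variable q : nat.
Hypothesis q4 : 4 <= q.
Hypothesis qe : ~~ odd q.
Variable S : {set {set 'I_q}}.
Hypothesis hS4 : forall Q, Q \in S -> #|Q| = 4.
Hypothesis hS3 : forall T : {set 'I_q}, #|T| = 3 -> #|[set Q in S | T \subset Q]| = 1.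
Hypothesis hstep : forall (t : nat) (i j : 'I_q), val i = t.*2 -> val j = t.*2.+1 ->
  forall Q, Q \in S -> i \in Q -> j \in Q -> forall a b : 'I_q, a \in Q -> b \in Q ->
  a != i -> a != j -> b != i -> b != j ->
  ((val a < val i) && (val b < val i)) || ((val j < val a) && (val j < val b)).

Local Notation Y := ('I_q * 'I_q * 'I_q)%type.

Definition d0 : 'I_q := Ordinal (leq_trans (isT : 0 < 4) q4).
Definition sgQ (Q : {set 'I_q}) (i : nat) : 'I_q := nth d0 (enum Q) i.
Definition matched (Q : {set 'I_q}) := (val (sgQ Q 2))./2 == (val (sgQ Q 3))./2.
Definition design Q := if matched Q then patM else patU.

Lemma partner_ex (b : 'I_q) : exists c : 'I_q, c != b /\ (val c)./2 = (val b)./2.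
Proof.
have hb := odd_double_half b.
case ob: (odd b).
  have b0 : 0 < val b by move: ob; clear hb; case: b => [[|n] Hn].
  have lt : (val b).-1 < q by apply: leq_ltn_trans (leq_pred _) (ltn_ord b).
  exists (Ordinal lt); split.
    apply/eqP => /(congr1 val) /= e.
    by have := ltn_predL (val b); rewrite b0 e ltnn.
  rewrite /=; move: (b./2) hb => h hb; rewrite -hb ob add1n /=.
  by rewrite doubleK.
have lt : (val b).+1 < q.
  have : (val b).+1 <= q := ltn_ord b.
  rewrite leq_eqVlt => /orP[/eqP e|//]; have := congr1 odd e; by rewrite /= ob (negbTE qe).
exists (Ordinal lt); split.
  by apply/eqP => /(congr1 val) /= /eqP; rewrite eqn_leq ltnn.
rewrite /=; move: (b./2) hb => h hb; rewrite -hb ob add0n /=.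
by rewrite uphalf_double.
Qed.


Section SigQ.
Variable Q : {set 'I_q}.
Hypothesis hQ : #|Q| = 4.

Lemma size_enumQ : size (enum Q) = 4.
Proof. by rewrite -cardE. Qed.

Lemma sig_in i : i < 4 -> sgQ Q i \in Q.
Proof. by move=> hi; rewrite -mem_enum /sgQ mem_nth // size_enumQ. Qed.

Lemma sig_inj i j : i < 4 -> j < 4 -> sgQ Q i = sgQ Q j -> i = j.
Proof.
move=> hi hj /eqP; rewrite /sgQ nth_uniq ?size_enumQ ?enum_uniq //; exact/eqP.
Qed.

Lemma sig_lt_mono i j : i < 4 -> j < 4 -> i < j -> val (sgQ Q i) < val (sgQ Q j).
Proof.
move=> hi hj ij.
have := sorted_ltn_nth (leT := fun a b : 'I_q => val a < val b) _ d0 (enum_sorted Q).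
move=> /(_ _ i j); apply => //; rewrite ?inE ?size_enumQ //.
by move=> a b c; apply: ltn_trans.
Qed.

Lemma sig_lt i j : i < 4 -> j < 4 -> (val (sgQ Q i) < val (sgQ Q j)) = (i < j).
Proof.
move=> hi hj; case: (ltngtP i j) => [ij|ji|->]; first exact: sig_lt_mono.
  by apply/negbTE; rewrite -leqNgt ltnW // sig_lt_mono.
by rewrite ltnn.
Qed.

Lemma sig_surj a : a \in Q -> exists2 i, i < 4 & a = sgQ Q i.
Proof.
move=> aQ; exists (index a (enum Q)); first by rewrite -size_enumQ index_mem mem_enum.
by rewrite /sgQ nth_index // mem_enum.
Qed.
End SigQ.

Lemma sig_ne (Q : {set 'I_q}) i j : #|Q| = 4 -> i < 4 -> j < 4 -> i != j -> sgQ Q i != sgQ Q j.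
Proof. by move=> hQ hi hj; apply: contra => /eqP /(sig_inj hQ hi hj) ->. Qed.

Lemma pairpos (Q : {set 'I_q}) k l : Q \in S -> k < l -> l < 4 ->
  (val (sgQ Q k))./2 = (val (sgQ Q l))./2 ->
  ((k == 0) && (l == 1)) || ((k == 2) && (l == 3)).
Proof.
move=> QS kl l4 e; have hQ := hS4 QS; have k4 : k < 4 := ltn_trans kl l4.
have lt := sig_lt_mono hQ k4 l4 kl.
have el := half_eq e lt.
have ek : val (sgQ Q k) = ((val (sgQ Q k))./2).*2.
  have h1 := odd_double_half (sgQ Q k); have h2 := odd_double_half (sgQ Q l).
  rewrite -e el /= in h2; move: h1 h2; case: (odd _) => /= h1 h2.
    by exfalso; rewrite -?plusE in h1 h2; lia.
  by rewrite add0n in h1; apply: esym.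
have el' : val (sgQ Q l) = ((val (sgQ Q k))./2).*2.+1 by rewrite el -ek.
apply: pairpos_fin => // m n m4 n4 mk ml nk nl.
have := hstep ek el' QS (sig_in hQ k4) (sig_in hQ l4) (sig_in hQ m4) (sig_in hQ n4)
  (sig_ne hQ m4 k4 mk) (sig_ne hQ m4 l4 ml) (sig_ne hQ n4 k4 nk) (sig_ne hQ n4 l4 nl).
by rewrite !sig_lt.
Qed.

Lemma sqs_uniq (Q1 Q2 T : {set 'I_q}) : Q1 \in S -> Q2 \in S -> #|T| = 3 ->
  T \subset Q1 -> T \subset Q2 -> Q1 = Q2.
Proof.
move=> h1 h2 hT s1 s2; have /eqP/cards1P[Q0 e] := hS3 hT.
have : Q1 \in [set Q in S | T \subset Q] by rewrite inE h1 s1.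
have : Q2 \in [set Q in S | T \subset Q] by rewrite inE h2 s2.
by rewrite e !inE => /eqP -> /eqP ->.
Qed.

Lemma sqs_ex (T : {set 'I_q}) : #|T| = 3 -> exists2 Q, Q \in S & T \subset Q.
Proof.
move=> hT; have /eqP/cards1P[Q0 e] := hS3 hT.
have : Q0 \in [set Q in S | T \subset Q] by rewrite e set11.
by rewrite inE => /andP[h1 h2]; exists Q0.
Qed.

Lemma card3 (a b c : 'I_q) : a != b -> a != c -> b != c -> #|[set a; b; c]| = 3.
Proof.
move=> ab ac bc.
have -> : [set a; b; c] = a |: [set b; c] by apply/setP => x; rewrite !inE orbA.
by rewrite cardsU1 cards2 bc !inE negb_or ab ac.
Qed.

Definition cw (s : seq 'I_q) : bool :=
  [|| [exists a : 'I_q, s == [:: a; a; a; a]],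
      [exists a : 'I_q, exists b : 'I_q, (a != b) && (s == [:: a; a; b; b])]
    | [exists Q in S, has (fun p => s == map (sgQ Q) p) (design Q)]].

Definition Cset := [set x : 4.-tuple 'I_q | cw (val x)].

Lemma des_good Q p : p \in design Q -> [/\ size p = 4, all (fun i => i < 4) p & FF p = 4].
Proof.
rewrite /design; case: (matched Q) => hp.
  by have /allP/(_ p hp)/andP[/andP[/eqP -> ->] /eqP ->] := goodM.
by have /allP/(_ p hp)/andP[/andP[/eqP -> ->] /eqP ->] := goodU.
Qed.

Lemma sig_inj_in (Q : {set 'I_q}) (p : seq nat) : Q \in S -> all (fun i => i < 4) p ->
  {in p &, injective (sgQ Q)}.
Proof.
move=> QS /allP hp i j hi hj; apply: (sig_inj (hS4 QS)); [exact: hp | exact: hp].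
Qed.

Lemma FF_cw s : cw s -> FF s = 4.
Proof.
case/or3P.
- case/existsP => a /eqP ->.
  have -> : [:: a; a; a; a] = map (fun _ : nat => a) [:: 0; 0; 0; 0] by [].
  rewrite FF_map //; by move=> [|i] [|j] //; rewrite !inE.
- case/existsP => a /existsP[b /andP[ab /eqP ->]].
  have -> : [:: a; a; b; b] = map (fun i : nat => if i == 0 then a else b) [:: 0; 0; 1; 1] by [].
  rewrite FF_map //; move=> [|[|i]] [|[|j]] //=; rewrite ?inE //= => _ _ /eqP.
    by rewrite (negbTE ab).
  by rewrite eq_sym (negbTE ab).
- case/existsP => Q /andP[QS /hasP[p hp /eqP ->]].
  have [_ h4 hF] := des_good hp.
  by rewrite (FF_map (sig_inj_in QS h4)).
Qed.
Lemma des_shape Q p z : p \in design Q -> z \in del_ball p -> uniq z || (matched Q && cross z).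
Proof.
rewrite /design; case: (matched Q) => hp hz /=.
  by have /allP/(_ p hp)/allP/(_ z hz) := shapeM.
by have /allP/(_ p hp)/allP/(_ z hz) -> := shapeU.
Qed.

Lemma cross_block Q i j : Q \in S -> matched Q -> i < 4 -> j < 4 -> cross [:: i; j; i] ->
  exists c, [/\ c \in Q, c != sgQ Q i, c != sgQ Q j &
    ((val (sgQ Q i) < val (sgQ Q j)) && ((val c)./2 == (val (sgQ Q j))./2))
    || ((val (sgQ Q j) < val (sgQ Q i)) && ((val c)./2 == (val (sgQ Q i))./2))].
Proof.
move=> QS mQ i4 j4 cr; have hQ := hS4 QS.
have /and4P[k4 ki kj H] := cross_fin i4 j4 cr.
exists (sgQ Q (5 - maxn i j)); split.
- exact: sig_in.
- by apply: sig_ne.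
- by apply: sig_ne.
rewrite !sig_lt //.
move: mQ; rewrite /matched => /eqP mQ.
case/orP: H => /andP[-> /orP[]/andP[/eqP e1 /eqP e2]]; rewrite ?e2 ?e1 mQ ?eqxx ?orbT //.
Qed.
Lemma size_del_ball4 (T : eqType) (p z : seq T) : size p = 4 -> z \in del_ball p -> size z = 3.
Proof.
move=> sp /mapP[k]; rewrite mem_iota sp add0n => hk ->.
rewrite /del1 size_cat size_take size_drop sp.
by case: k hk => [|[|[|[|?]]]].
Qed.

Lemma letters_lt4 Q p z : p \in design Q -> z \in del_ball p ->
  [/\ size z = 3 & all (fun i => i < 4) z].
Proof.
move=> hp hz; have [sp hp4 _] := des_good hp; split; first exact: size_del_ball4 hz.
apply/allP => i /(del_ball_sub hz) hi; exact: (allP hp4).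
Qed.

Lemma cross_ne i j k : cross [:: i; j; k] -> (i == k) && (i != j).
Proof.
rewrite /cross => /andP[-> /orP[]/andP[h1 h2]] /=; apply/eqP => e; subst.
  by move: (leq_trans h2 h1).
by move: (leq_trans h1 h2).
Qed.

Lemma sameQ Q1 Q2 p1 p2 z1 z2 : Q1 \in S -> Q2 \in S -> p1 \in design Q1 -> p2 \in design Q2 ->
  z1 \in del_ball p1 -> z2 \in del_ball p2 -> map (sgQ Q1) z1 = map (sgQ Q2) z2 -> Q1 = Q2.
Proof.
move=> Q1S Q2S hp1 hp2 hz1 hz2 e.
have hQ1 := hS4 Q1S; have hQ2 := hS4 Q2S.
have s1 := des_shape hp1 hz1; have s2 := des_shape hp2 hz2.
have [sz1 l1] := letters_lt4 hp1 hz1; have [sz2 l2] := letters_lt4 hp2 hz2.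
move: z1 z2 sz1 sz2 l1 l2 s1 s2 e {hz1 hz2} => [|i [|j [|k [|? ?]]]] // [|i' [|j' [|k' [|? ?]]]] //.
move=> _ _ /= /and4P[i4 j4 k4 _] /and4P[i4' j4' k4' _] s1 s2 [ei ej ek].
case/orP: s1 => [u1 | /andP[m1 c1]].
  move: u1; rewrite /= !inE negb_or andbT => /andP[/andP[ij ik] jk].
  apply: (@sqs_uniq _ _ [set sgQ Q1 i; sgQ Q1 j; sgQ Q1 k]) => //.
  - by apply: card3; apply: sig_ne.
  - by apply/subsetP => x; rewrite !inE => /orP[/orP[]|] /eqP ->; apply: sig_in.
  - by apply/subsetP => x; rewrite !inE ei ej ek => /orP[/orP[]|] /eqP ->; apply: sig_in.
have /andP[/eqP eik nij] := cross_ne c1; subst k.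
case/orP: s2 => [u2 | /andP[m2 c2]].
  move: u2; rewrite /= !inE negb_or andbT => /andP[/andP[_ /eqP ik'] _].
  by exfalso; apply: ik'; apply: (sig_inj hQ2) => //; rewrite -ei -ek.
have /andP[/eqP eik' nij'] := cross_ne c2; subst k'.
have [c [cQ1 ca cb hc]] := cross_block Q1S m1 i4 j4 c1.
have [c' [cQ2 ca' cb' hc']] := cross_block Q2S m2 i4' j4' c2.
rewrite -ei -ej in ca' cb' hc'.
have ecc : c = c'.
  apply: val_inj; move: hc hc'.
  case: (ltngtP (val (sgQ Q1 i)) (val (sgQ Q1 j))) => //= _; rewrite ?orbF => /eqP h /eqP h'.
    exact: (partner_uniq h cb h' cb').
  exact: (partner_uniq h ca h' ca').
subst c'.
apply: (@sqs_uniq _ _ [set sgQ Q1 i; sgQ Q1 j; c]) => //.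
- by apply: card3; [exact: sig_ne | rewrite eq_sym | rewrite eq_sym].
- by apply/subsetP => x; rewrite !inE => /orP[/orP[]|] /eqP -> //; apply: sig_in.
- by apply/subsetP => x; rewrite !inE ei ej => /orP[/orP[]|] /eqP -> //; apply: sig_in.
Qed.
Lemma des_disj Q p1 p2 z : p1 \in design Q -> p2 \in design Q ->
  z \in del_ball p1 -> z \in del_ball p2 -> p1 = p2.
Proof.
rewrite /design; case: (matched Q) => h1 h2 z1 z2.
  have /allP/(_ p1 h1)/allP/(_ p2 h2)/orP[/eqP //|/hasPn/(_ z z1)] := disjM.
  by rewrite z2.
have /allP/(_ p1 h1)/allP/(_ p2 h2)/orP[/eqP //|/hasPn/(_ z z1)] := disjU.
by rewrite z2.
Qed.

Definition simple (s : seq 'I_q) :=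
  [exists a : 'I_q, s == [:: a; a; a; a]]
  || [exists a : 'I_q, exists b : 'I_q, (a != b) && (s == [:: a; a; b; b])].

Lemma simple_ball s w : simple s -> w \in del_ball s ->
  s = [:: nth d0 w 0; nth d0 w 0; nth d0 w 2; nth d0 w 2] /\
  ((nth d0 w 0 == nth d0 w 1) || (nth d0 w 1 == nth d0 w 2)).
Proof.
case/orP.
  case/existsP => a /eqP -> /=; rewrite !inE.
  by case/or4P => /eqP ->; rewrite /= eqxx.
case/existsP => a /existsP[b /andP[ab /eqP ->]] /=; rewrite !inE.
by case/or4P => /eqP ->; rewrite /= eqxx ?orbT.
Qed.

Lemma qword_ball Q p w : Q \in S -> p \in design Q -> w \in del_ball (map (sgQ Q) p) ->
  exists2 z, z \in del_ball p & w = map (sgQ Q) z /\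
  (nth d0 w 0 != nth d0 w 1) && (nth d0 w 1 != nth d0 w 2).
Proof.
move=> QS hp /del_ball_map_inv[z hz ->]; exists z => //; split => //.
have hQ := hS4 QS; have [sz l] := letters_lt4 hp hz; have sh := des_shape hp hz.
move: z sz l sh {hz} => [|i [|j [|k [|? ?]]]] // _ /and4P[i4 j4 k4 _] /= sh.
have [ij jk] : i != j /\ j != k.
  case/orP: sh => [|/and3P[_ /eqP <- c]].
    by rewrite !inE negb_or => /and3P[/andP[ij ik] jk _].
  have cr : cross [:: i; j; i] by rewrite /cross eqxx c.
  have /andP[_ nij] := cross_ne cr.
  by split; rewrite // eq_sym.
by rewrite !sig_ne.
Qed.

Lemma cw_split s : cw s -> simple s \/ exists Q p, [/\ Q \in S, p \in design Q & s = map (sgQ Q) p].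
Proof.
rewrite /cw /simple; case/or3P => [h|h|]; first by left; rewrite h.
  by left; rewrite h orbT.
by case/existsP => Q /andP[QS /hasP[p hp /eqP ->]]; right; exists Q, p.
Qed.

Lemma cw_eq s1 s2 w : cw s1 -> cw s2 -> w \in del_ball s1 -> w \in del_ball s2 -> s1 = s2.
Proof.
move=> /cw_split[h1|[Q1 [p1 [Q1S hp1 ->]]]] /cw_split[h2|[Q2 [p2 [Q2S hp2 ->]]]] w1 w2.
- by have [-> _] := simple_ball h1 w1; have [-> _] := simple_ball h2 w2.
- have [_ r1] := simple_ball h1 w1; have [z _ [_ r2]] := qword_ball Q2S hp2 w2.
  by move: r1; case/andP: r2 => /negbTE -> /negbTE ->.
- have [_ r1] := simple_ball h2 w2; have [z _ [_ r2]] := qword_ball Q1S hp1 w1.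
  by move: r1; case/andP: r2 => /negbTE -> /negbTE ->.
have [z1 hz1 [e1 _]] := qword_ball Q1S hp1 w1.
have [z2 hz2 [e2 _]] := qword_ball Q2S hp2 w2.
have eQ := sameQ Q1S Q2S hp1 hp2 hz1 hz2 (etrans (esym e1) e2); subst Q2.
have ez : z1 = z2.
  have [_ l1] := letters_lt4 hp1 hz1; have [_ l2] := letters_lt4 hp2 hz2.
  have inj : {in [pred i | i < 4] &, injective (sgQ Q1)}.
    by move=> i j hi hj; apply: (sig_inj (hS4 Q1S)).
  apply: (inj_in_map inj); rewrite ?inE //; last by rewrite -e1 -e2.
have hz2' : z1 \in del_ball p2 by rewrite ez.
by rewrite (des_disj hp1 hp2 hz1 hz2').
Qed.
Lemma cover_S (lo hi : 'I_q) : val lo < val hi -> (val lo)./2 != (val hi)./2 ->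
  exists Q i j, [/\ Q \in S, matched Q, i < 2, (2 <= j) && (j < 4) & (sgQ Q i = lo /\ sgQ Q j = hi)].
Proof.
move=> lh hne.
have [c [chi ch]] := partner_ex hi.
have lc : lo != c by apply: contraNneq hne => ->; rewrite ch.
have lohi : lo != hi by apply: contraTneq lh => ->; rewrite ltnn.
have hc : hi != c by rewrite eq_sym.
have [Q QS sT] := sqs_ex (card3 lohi lc hc).
have hQ := hS4 QS.
have lT : lo \in [set lo; hi; c] by rewrite !inE eqxx.
have hT : hi \in [set lo; hi; c] by rewrite !inE eqxx orbT.
have cT : c \in [set lo; hi; c] by rewrite !inE eqxx orbT.
have [il il4 el] := sig_surj hQ (subsetP sT lo lT).
have [ih ih4 eh] := sig_surj hQ (subsetP sT hi hT).
have [ic ic4 ec] := sig_surj hQ (subsetP sT c cT).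
have iltih : il < ih by rewrite -(sig_lt hQ) // -el -eh.
have ihic : ih != ic by apply: contraNneq hc => e; rewrite eh ec e.
have ilic : il != ic by apply: contraNneq lc => e; rewrite el ec e.
have hh : (val (sgQ Q ih))./2 = (val (sgQ Q ic))./2 by rewrite -eh -ec ch.
exists Q.
case: (ltngtP ih ic) => [lt|lt|e]; last by rewrite e eqxx in ihic.
  have := pairpos QS lt ic4 hh; case/orP => /andP[/eqP e1 /eqP e2]; subst ih ic => //.
  by exists il, 2; split => //; rewrite /matched hh.
have := pairpos QS lt ih4 (esym hh); case/orP => /andP[/eqP e1 /eqP e2]; subst ih ic.
  by case: il iltih ilic {il4 el} => [|[|]].
exists il, 3; split => //; first by rewrite /matched hh.
by case: il iltih ilic {il4 el} => [|[|[|]]].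
Qed.
Lemma qword_cover Q p z : Q \in S -> p \in design Q -> z \in del_ball p ->
  exists x, x \in Cset /\ map (sgQ Q) z \in del_ball (val x).
Proof.
move=> QS hp hz; have [sp _ _] := des_good hp.
have h : size (map (sgQ Q) p) == 4 by rewrite size_map sp.
exists (Tuple h); split; last by rewrite /= del_ball_map map_f.
rewrite inE /cw /=; apply/or3P; apply: Or33; apply/existsP; exists Q.
by rewrite QS; apply/hasP; exists p.
Qed.

Definition pS (y : Y) : bool :=
  [&& y.1.1 == y.2, y.1.1 != y.1.2 & (val y.1.1)./2 == (val y.1.2)./2].

Lemma coverage (y : Y) : ~~ pS y -> exists x, x \in Cset /\ tseq y \in del_ball (val x).
Proof.
case: y => [[a b] c]; rewrite /pS /tseq /= => npS.
case: (a =P b) => [<-|ab].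
  case: (a =P c) => [<-|/eqP ac].
    exists [tuple a; a; a; a]; split; last by rewrite /= !inE eqxx.
    by rewrite inE /cw /=; apply/or3P; apply: Or31; apply/existsP; exists a.
  exists [tuple a; a; c; c]; split; last by rewrite /= !inE eqxx !orbT.
  rewrite inE /cw /=; apply/or3P; apply: Or32; apply/existsP; exists a.
  by apply/existsP; exists c; rewrite ac eqxx.
case: (b =P c) => [<-|bc].
  exists [tuple a; a; b; b]; split; last by rewrite /= !inE eqxx.
  rewrite inE /cw /=; apply/or3P; apply: Or32; apply/existsP; exists a.
  apply/existsP; exists b; move/eqP: ab => ->; by rewrite eqxx.
case: (a =P c) => [eac|ac].
  subst c.
  have hne : (val a)./2 != (val b)./2.
    by move: npS; rewrite eqxx /=; move/eqP: ab => ->.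
  case: (ltngtP (val a) (val b)) => [lt|lt|e]; last by exfalso; apply: ab; apply: val_inj.
    have [Q [i [j [QS mQ i2 /andP[j2 j4] [ei ej]]]]] := cover_S lt hne.
    have cr : cross [:: i; j; i] by rewrite /cross eqxx i2 j2.
    have /hasP[p hp hz] := cover_cross (leq_trans i2 (isT : 2 <= 4)) j4 cr.
    have hp' : p \in design Q by rewrite /design mQ.
    have [x [xC hx]] := qword_cover QS hp' hz.
    by exists x; split => //; move: hx; rewrite /= ei ej.
  rewrite eq_sym in hne.
  have [Q [i [j [QS mQ i2 /andP[j2 j4] [ei ej]]]]] := cover_S lt hne.
  have cr : cross [:: j; i; j] by rewrite /cross eqxx j2 i2 orbT.
  have /hasP[p hp hz] := cover_cross j4 (leq_trans i2 (isT : 2 <= 4)) cr.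
  have hp' : p \in design Q by rewrite /design mQ.
  have [x [xC hx]] := qword_cover QS hp' hz.
  by exists x; split => //; move: hx; rewrite /= ei ej.
have [Q QS sT] := sqs_ex (card3 (introN eqP ab) (introN eqP ac) (introN eqP bc)).
have hQ := hS4 QS.
have aT : a \in [set a; b; c] by rewrite !inE eqxx.
have bT : b \in [set a; b; c] by rewrite !inE eqxx orbT.
have cT : c \in [set a; b; c] by rewrite !inE eqxx orbT.
have [ia ia4 ea] := sig_surj hQ (subsetP sT a aT).
have [ib ib4 eb] := sig_surj hQ (subsetP sT b bT).
have [ic ic4 ec] := sig_surj hQ (subsetP sT c cT).
have u : uniq [:: ia; ib; ic].
  rewrite /= !inE negb_or andbT; apply/andP; split; first (apply/andP; split).
  - by apply: contra_not_neq ab => e; rewrite ea eb e.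
  - by apply: contra_not_neq ac => e; rewrite ea ec e.
  - by apply: contra_not_neq bc => e; rewrite eb ec e.
have /hasP[p hp hz] : has (fun p => [:: ia; ib; ic] \in del_ball p) (design Q).
  by apply: cover_dist => //; rewrite /design; case: (matched Q); [right|left].
have [x [xC hx]] := qword_cover QS hp hz.
by exists x; split => //; move: hx; rewrite /= -ea -eb -ec.
Qed.
Lemma Cset_sdc : single_del_correcting Cset.
Proof.
apply/forallP => x; apply/implyP => xC; apply/forallP => y; apply/implyP => yC.
apply/implyP => nxy; apply/hasPn => w wx; apply/negP => wy.
rewrite !inE in xC yC.
by move: nxy; rewrite (val_inj (cw_eq xC yC wx wy)) eqxx.
Qed.

Lemma pS_sum : \sum_(y : Y) pS y <= q.
Proof.
rewrite sum3 -[X in _ <= X]card_ord -sum1_card; apply: leq_sum => a _.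
have -> : \sum_(b : 'I_q) \sum_(c : 'I_q) pS (a, b, c) =
          \sum_(b : 'I_q) ((a != b) && ((val a)./2 == (val b)./2)).
  apply: eq_bigr => b _; rewrite (bigD1 a) //= big1 ?addn0.
    by rewrite /pS /= eqxx.
  by move=> c ca; rewrite /pS /= eq_sym (negbTE ca).
apply: sum_le1 => b1 b2 /andP[n1 /eqP h1] /andP[n2 /eqP h2]; apply: val_inj.
by apply: (partner_uniq (esym h1) _ (esym h2)); rewrite // eq_sym.
Qed.

Lemma lower_count : q ^ 3 + 2 * q ^ 2 + q <= #|Cset| * 4 + q.
Proof.
have sdc := Cset_sdc.
have e1 : \sum_(x in Cset) FF (val x) = #|Cset| * 4.
  rewrite -sum1_card big_distrl /=; apply: eq_bigr => x; rewrite inE => /FF_cw ->.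
  by rewrite mul1n.
rewrite -(sumW q) -e1 sumFF.
have -> : \sum_(y : Y) W (tseq y) = \sum_(y : Y) W (tseq y) * cov Cset y
            + \sum_(y : Y) W (tseq y) * (1 - cov Cset y).
  rewrite -big_split /=; apply: eq_bigr => y _.
  by rewrite -mulnDr subnKC ?cov_le1 // muln1.
rewrite leq_add2l; apply: leq_trans pS_sum; apply: leq_sum => y _.
case: (boolP (pS y)) => hy.
  move: hy; case: y => [[a b] c]; rewrite /pS /= => /and3P[/eqP <- ab _].
  rewrite /W /tseq /= (negbTE ab) eq_sym (negbTE ab) /=.
  by rewrite mul1n leq_subr.
have [x [xC hx]] := coverage hy.
have : 1 <= cov Cset y.
  by rewrite /cov (bigD1 x) //= hx.
by rewrite -subn_eq0 => /eqP ->; rewrite muln0.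
Qed.
End Lower.


Theorem theorem3p1 (q : nat) (hq : 4 <= q) (heven : ~~ odd q)
  (hSQS : exists (S : {set {set 'I_q}}) (L : {perm 'I_q}),
            is_SQS S /\ step_property S L) :
  N1 4 q = q ^ 2 * (q + 2) %/ 4.
Proof.
have [S0 [L0 [hS0 hst0]]] := hSQS.
have [S [hS hst]] := relabel hS0 hst0.
move: hS => /andP[/forallP h4 /forallP h3].
have hS4 : forall Q, Q \in S -> #|Q| = 4.
  by move=> Q QS; have := h4 Q; rewrite QS => /eqP.
have hS3 : forall T : {set 'I_q}, #|T| = 3 -> #|[set Q in S | T \subset Q]| = 1.
  by move=> T hT; have := h3 T; rewrite hT eqxx => /eqP.
have hstep : forall (t : nat) (i j : 'I_q), val i = t.*2 -> val j = t.*2.+1 ->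
  forall Q, Q \in S -> i \in Q -> j \in Q -> forall a b : 'I_q, a \in Q -> b \in Q ->
  a != i -> a != j -> b != i -> b != j ->
  ((val a < val i) && (val b < val i)) || ((val j < val a) && (val j < val b)).
  move=> t i j hi hj Q QS iQ jQ a b aQ bQ.
  by apply: (hst t i j hi hj Q QS); rewrite perm1.
have eT : q ^ 2 * (q + 2) = q ^ 3 + 2 * q ^ 2.
  by rewrite mulnDr -expnSr mulnC.
have q0 : 0 < q by apply: leq_trans hq.
apply/eqP; rewrite eqn_leq; apply/andP; split.
  rewrite /N1; apply/bigmax_leqP => C hC.
  have := upper_main hC q0 heven; rewrite leq_add2r -eT => h.
  by rewrite leq_divRL.
have hl := lower_count hq heven hS4 hS3 hstep.
rewrite leq_add2r -eT in hl.
apply: leq_trans (leq_bigmax_cond _ (Cset_sdc hq hS4 hS3)).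
rewrite -(leq_pmul2r (isT : 0 < 4)); apply: leq_trans hl.
exact: leq_trunc_div.
Qed.
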